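(* Let $C$ be a nonzero $[n,k]_q$-linear code. If there exists a codeword $\mathbf{c}\in C$ such that $w_1(\mathbf{c})=d_1(C)$ and $\chi_1(\mathbf{c})$ is a successive subset of $\mathbb{Z}_n$, then $d_b(C)=\min\{d_1(C)+b-1,\,n\}$ for every $1\le b\le n$.
   Context: Index set: $\mathbb{Z}_n=\{1,2,\dots,n\}$ with indices taken cyclically modulo $n$ (so $n\equiv 0$ and $n+1\equiv 1$). For $\mathbf{x}=(x_1,\dots,x_n)\in\mathbb{F}_q^n$ and $1\le b\le n$, the $b$-symbol support is $\chi_b(\mathbf{x})=\{i\in\mathbb{Z}_n : (x_i,x_{i+1},\dots,x_{i+b-1})\ne \mathbf{0}\}$ (indices mod $n$), the $b$-symbol weight is $w_b(\mathbf{x})=|\chi_b(\mathbf{x})|$ ($w_1$ is the Hamming weight), and for a linear code $C$, $d_b(C)=\min_{\mathbf{0}\ne \mathbf{c}\in C} w_b(\mathbf{c})$. For $J\subseteq\mathbb{Z}_n$, a hole of $J$ of size $h\ge1$ is a set $H=\{a+1,\dots,a+h\}\subseteq \mathbb{Z}_n\setminus J$ (indices mod $n$) with $a\in J$ and $a+h+1\in J$; $\mathbb{H}(J)$ denotes the set of all holes of $J$. $J$ is a successive subset of $\mathbb{Z}_n$ if $|\mathbb{H}(J)|\le 1$. *)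

(* Defs.v *)
From HB Require Import structures.
From mathcomp Require Import all_boot all_order all_algebra all_field.
Set Implicit Arguments. Unset Strict Implicit. Unset Printing Implicit Defensive.
Import GRing.Theory.
Local Open Scope ring_scope.

(* Coordinates of a word of length n are indexed by 'I_n = {0,...,n-1}
   (the paper's Z_n = {1,...,n}, shifted by one); indices are cyclic mod n. *)

Definition cyc (n : nat) (i : 'I_n) (k : nat) : 'I_n :=
  Ordinal (ltn_pmod (i + k)%N (leq_ltn_trans (leq0n i) (ltn_ord i))).

Section BSymbol.
Variables (F : finFieldType) (n : nat).

Definition bsupp (b : nat) (x : 'rV[F]_n) : {set 'I_n} :=
  [set i : 'I_n | [exists j : 'I_b, x 0 (cyc i j) != 0]].

Definition bweight (b : nat) (x : 'rV[F]_n) : nat := #|bsupp b x|.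

(* minimum b-symbol distance of a linear code C: minimum of the b-weights of
   nonzero codewords (every weight is <= n, so the neutral element n of the
   min is harmless whenever C is nonzero). *)
Definition bdist (b : nat) (C : {vspace 'rV[F]_n}) : nat :=
  \big[minn/n]_(c : 'rV[F]_n | (c \in C) && (c != 0)) bweight b c.

End BSymbol.

Section Holes.
Variable n : nat.

(* holes of J : sets H = {a+1, ..., a+h} (h >= 1) contained in the complement
   of J, with a \in J and a+h+1 \in J (indices mod n). h < n necessarily. *)
Definition holes (J : {set 'I_n}) : {set {set 'I_n}} :=
  [set H : {set 'I_n} | [exists a : 'I_n, exists h : 'I_n,
     [&& 0 < h, a \in J, cyc a h.+1 \in J,
         H == [set i : 'I_n | [exists j : 'I_h, i == cyc a j.+1]]
       & H \subset ~: J]]]%N.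

Definition successive (J : {set 'I_n}) : bool := (#|holes J| <= 1)%N.

End Holes.

(* Main.v *)
Require Import Defs.
From mathcomp Require Import all_boot all_order all_algebra all_field.
From mathcomp Require Import zify.
Import GRing.Theory.
Set Implicit Arguments. Unset Strict Implicit. Unset Printing Implicit Defensive.

Section Aux.
Variable n : nat.
Implicit Types i j : 'I_n.

Lemma cyc_add i a c : cyc (cyc i a) c = cyc i (a + c).
Proof. apply: val_inj => /=. by rewrite modnDml addnA. Qed.

Lemma cyc0 i : cyc i 0 = i.
Proof. apply: val_inj => /=. by rewrite addn0 modn_small. Qed.

Lemma cyc_inj k : injective (fun i : 'I_n => cyc i k).
Proof.
move=> i j /(congr1 val) /= h; apply: val_inj.
have hi := ltn_ord i; have hj := ltn_ord j.
have: (i + k == j + k %[mod n]) by apply/eqP.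
rewrite eqn_modDr !modn_small //; by move/eqP.
Qed.

Lemma cyc_reach i j : exists k, j = cyc i k.
Proof.
exists (j + (n - i))%N; apply: val_inj => /=.
have hi := ltn_ord i; have hj := ltn_ord j.
rewrite addnA (addnC i) -addnA subnKC; last exact: ltnW.
by rewrite modnDr modn_small.
Qed.
End Aux.

Lemma cyc_mod n (i : 'I_n) a c : a %% n = c %% n -> cyc i a = cyc i c.
Proof. move=> h; apply: val_inj => /=. by rewrite -modnDmr h modnDmr. Qed.

Lemma cyc_n n (i : 'I_n) : cyc i n = i.
Proof. apply: val_inj => /=; by rewrite modnDr modn_small. Qed.

Definition Lset n (J : {set 'I_n}) : {set 'I_n} :=
  [set e | (e \in J) && (cyc e (n - 1) \notin J)].

Section Hole.
Variables (n : nat) (J : {set 'I_n}) (e : 'I_n).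
Hypothesis eL : e \in Lset J.

Let n_gt0 : (0 < n)%N. Proof. exact: leq_ltn_trans (leq0n e) (ltn_ord e). Qed.
Let eJ : e \in J. Proof. by move: eL; rewrite inE => /andP[]. Qed.
Let epJ : cyc e (n - 1) \notin J. Proof. by move: eL; rewrite inE => /andP[]. Qed.

Let Pex : exists t, (0 < t <= n)%N && (cyc e (n - t) \in J).
Proof. exists n; rewrite n_gt0 leqnn subnn cyc0 eJ. done. Qed.

Lemma hole_exists : exists2 H, H \in holes J &
  (cyc e (n - 1) \in H) /\
  (forall e', e' \in Lset J -> e' != e -> cyc e' (n - 1) \notin H).
Proof.
case: (ex_minnP Pex) => t /andP[/andP[t0 tn] tJ] tmin.
have t2 : (1 < t)%N.
  rewrite ltnNge; apply/negP => t1.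
  have t1' : t = 1%N by lia.
  by move: epJ; rewrite -t1' tJ.
have hlt : (t - 1 < n)%N by lia.
pose a := cyc e (n - t).
pose h := Ordinal hlt.
have notJ : forall s, (0 < s < t)%N -> cyc e (n - s) \notin J.
  move=> s /andP[s0 st]; apply/negP => sJ.
  have : (t <= s)%N by apply: tmin; rewrite s0 sJ /=; lia.
  lia.
have aj : forall j, (j < t - 1)%N -> cyc a j.+1 = cyc e (n - (t - j.+1)).
  move=> j jl; rewrite /a cyc_add; congr cyc; lia.
exists [set i : 'I_n | [exists j : 'I_h, i == cyc a j.+1]].
- rewrite inE; apply/existsP; exists a; apply/existsP; exists h.
  apply/and5P; split.
  + rewrite /=; lia.
  + by [].
  + rewrite /a cyc_add (_ : (n - t + (t - 1).+1)%N = n) ?cyc_n //; lia.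
  + by [].
  + apply/subsetP => i; rewrite inE => /existsP[j /eqP ->].
    rewrite inE aj; last exact: ltn_ord j.
    apply: notJ; have := ltn_ord j; rewrite /= => jl; lia.
split.
- rewrite inE; apply/existsP.
  have jl : (t - 2 < h)%N by rewrite /=; lia.
  exists (Ordinal jl); rewrite aj /=; last lia.
  apply/eqP; congr cyc; lia.
- move=> e' e'L ne; rewrite inE; apply/negP => /existsP[j /eqP hj].
  have jl : (j < t - 1)%N := ltn_ord j.
  rewrite aj // in hj.
  have : cyc (cyc e' (n - 1)) 1 = cyc (cyc e (n - (t - j.+1))) 1 by rewrite hj.
  rewrite !cyc_add (_ : (n - 1 + 1)%N = n) ?cyc_n; last lia.
  move=> E.
  case: (t - j.+1 =P 1)%N => s1.
  + rewrite s1 (_ : (n - 1 + 1)%N = n) ?cyc_n in E; last lia.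
    by rewrite E eqxx in ne.
  + have : cyc e (n - (t - j.+2)) \notin J by apply: notJ; lia.
    rewrite (_ : (n - (t - j.+2))%N = (n - (t - j.+1) + 1)%N); last lia.
    rewrite -E; move: e'L; rewrite inE => /andP[-> _]. done.
Qed.
End Hole.

Lemma Lset_small n (J : {set 'I_n}) : successive J -> (#|Lset J| <= 1)%N.
Proof.
rewrite /successive => hs; rewrite leqNgt; apply/negP => /card_gt1P[e1 [e2 [e1L e2L ne]]].
have [H1 H1h [m1 o1]] := hole_exists e1L.
have [H2 H2h [m2 o2]] := hole_exists e2L.
have nH : H1 != H2.
  apply/negP => /eqP E; move: (o2 e1 e1L ne); by rewrite -E m1.
have : (#|[set H1; H2]| <= #|holes J|)%N.
  apply: subset_leq_card; apply/subsetP => H; rewrite in_set2 => /orP[] /eqP ->; by [rewrite H1h | rewrite H2h].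
rewrite cards2 nH; lia.
Qed.

Section BS.
Variables (F : finFieldType) (n : nat).
Implicit Types (x : 'rV[F]_n) (i : 'I_n).

Lemma bsupp1 x : bsupp 1 x = [set i | x ord0 i != 0%R].
Proof.
apply/setP => i; rewrite !inE; apply/existsP/idP => [[j]|h].
  by rewrite (ord1 j) /= cyc0.
by exists ord0; rewrite /= cyc0.
Qed.

Lemma bsuppS b x i : (0 < b)%N ->
  (i \in bsupp b.+1 x) = (i \in bsupp b x) || (cyc i 1 \in bsupp b x).
Proof.
move=> b0; rewrite !inE; apply/existsP/orP => [[j hj]|[/existsP[j hj]|/existsP[j hj]]].
- case: (ltnP j b) => jb.
    by left; apply/existsP; exists (Ordinal jb).
  have jeq : nat_of_ord j = b by have := ltn_ord j; lia.
  right; apply/existsP.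
  have bl : (b.-1 < b)%N by lia.
  exists (Ordinal bl); rewrite cyc_add /=.
  by rewrite (_ : (1 + b.-1)%N = j) //; lia.
- have jl : (j < b.+1)%N by have := ltn_ord j; lia.
  by exists (Ordinal jl).
- have jl : (j.+1 < b.+1)%N by have := ltn_ord j; lia.
  exists (Ordinal jl); by rewrite cyc_add add1n in hj.
Qed.

Lemma bsupp_new b x i : (0 < b)%N -> i \in bsupp b.+1 x -> i \notin bsupp b x ->
  cyc i b \in Lset (bsupp 1 x).
Proof.
move=> b0; rewrite inE => /existsP[j hj]; rewrite inE => hn.
case: (ltnP j b) => jb.
  by move: hn; rewrite negb_exists => /forallP /(_ (Ordinal jb)); rewrite hj.
have jeq : nat_of_ord j = b by have := ltn_ord j; lia.
rewrite bsupp1 !inE -jeq hj /=.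
have n0 : (0 < n)%N by have := ltn_ord i; lia.
have bl : (b.-1 < b)%N by lia.
move: hn; rewrite negb_exists => /forallP /(_ (Ordinal bl)); rewrite negbK.
rewrite cyc_add jeq (@cyc_mod _ i (b + (n - 1)) (b.-1)).
  by rewrite negbK.
rewrite (_ : (b + (n - 1))%N = (b.-1 + n)%N) ?modnDr //; lia.
Qed.

Lemma bsupp_upper b x : (0 < b)%N ->
  (#|bsupp b.+1 x| <= #|bsupp b x| + #|Lset (bsupp 1 x)|)%N.
Proof.
move=> b0.
have sub : bsupp b.+1 x \subset bsupp b x :|: (fun i => cyc i b) @^-1: Lset (bsupp 1 x).
  apply/subsetP => i hi; rewrite in_setU.
  case: (boolP (i \in bsupp b x)) => //= hn.
  have := bsupp_new b0 hi hn.
  by rewrite [in X in _ -> X]inE.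
apply: leq_trans (subset_leq_card sub) _.
rewrite cardsU card_preimset; last exact: cyc_inj.
exact: leq_subr.
Qed.

Lemma bsupp_lower b x : x != 0%R -> (0 < b)%N ->
  (minn (#|bsupp b x| + 1) n <= #|bsupp b.+1 x|)%N.
Proof.
move=> x0 b0.
set S := bsupp b x.
pose P := (fun i => cyc i 1) @^-1: S.
have E : bsupp b.+1 x = S :|: P.
  apply/setP => i; rewrite bsuppS // in_setU; congr (_ || _); by rewrite [in RHS]inE.
rewrite E.
case: (boolP (P \subset S)) => PS.
- have PeS : P = S.
    apply/eqP; rewrite eqEcard PS /P card_preimset ?leqnn //; exact: (@cyc_inj n 1).
  have [i xi] : exists i, x ord0 i != 0%R.
    apply/existsP; apply: contraR x0 => /existsPn h.
    by apply/eqP/rowP => i; rewrite mxE; move/negbTE: (h i) => /negbFE /eqP.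
  have iS : i \in S.
    by rewrite inE; apply/existsP; exists (Ordinal b0); rewrite /= cyc0.
  have allk : forall k, cyc i k \in S.
    elim => [|k IH]; first by rewrite cyc0.
    by move: IH; rewrite -{1}PeS /P [in X in X -> _]inE cyc_add addn1.
  have ST : S = setT.
    by apply/setP => j; rewrite in_setT; have [k ->] := cyc_reach i j; exact: allk.
  rewrite ST setTU cardsT card_ord; exact: geq_minr.
- have [i iP iS] : exists2 i, i \in P & i \notin S.
    by move/subsetPn: PS => [i ? ?]; exists i.
  have : S \proper S :|: P.
    rewrite properEcard subsetUl /=.
    apply: proper_card; rewrite properE subsetUl /=.
    apply/subsetPn; exists i => //; by rewrite in_setU iP orbT.
  move/proper_card => lt.
  apply: leq_trans (geq_minl _ _) _; by rewrite addn1.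
Qed.
End BS.

Section Main.
Variables (F : finFieldType) (n : nat).

Lemma bweight_lower x b : x != 0%R -> (0 < b)%N ->
  (minn (bweight 1 x + b - 1) n <= @bweight F n b x)%N.
Proof.
move=> x0; elim: b => // b IH _.
case: (posnP b) => [->|bp].
  rewrite /bweight; lia.
have := IH bp; have := bsupp_lower x0 bp; rewrite /bweight; lia.
Qed.

Lemma bweight_upper x b : successive (bsupp 1 x) -> (0 < b)%N ->
  (@bweight F n b x <= bweight 1 x + b - 1)%N.
Proof.
move=> hs; have := Lset_small hs => L1.
elim: b => // b IH _.
case: (posnP b) => [->|bp]; first by rewrite addn1 subn1.
have := IH bp; have := bsupp_upper x bp; rewrite /bweight; lia.
Qed.

Lemma bweight1_pos x : x != 0%R -> (0 < @bweight F n 1 x)%N.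
Proof.
move=> x0; have [i xi] : exists i, x ord0 i != 0%R.
  apply/existsP; apply: contraR x0 => /existsPn h.
  by apply/eqP/rowP => i; rewrite mxE; move/negbTE: (h i) => /negbFE /eqP.
rewrite /bweight card_gt0; apply/set0Pn; exists i; by rewrite bsupp1 inE.
Qed.

Lemma bweight_le_n x b : (@bweight F n b x <= n)%N.
Proof. by rewrite /bweight; apply: leq_trans (max_card _) _; rewrite card_ord. Qed.

Lemma bdist_le (C : {vspace 'rV[F]_n}) b c : c \in C -> c != 0%R ->
  (bdist b C <= bweight b c)%N.
Proof.
move=> cC c0; rewrite /bdist.
have : c \in index_enum 'rV[F]_n by rewrite mem_index_enum.
have Pc : (c \in C) && (c != 0%R) by rewrite cC c0.
elim: (index_enum _) => // a r IH; rewrite inE big_cons => /orP[/eqP <-|cr].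
  by rewrite Pc geq_minl.
case: ifP => _; last exact: IH.
apply: leq_trans (geq_minr _ _) (IH cr).
Qed.

Lemma bdist_ge (C : {vspace 'rV[F]_n}) b m : (m <= n)%N ->
  (forall x, x \in C -> x != 0%R -> (m <= bweight b x)%N) ->
  (m <= bdist b C)%N.
Proof.
move=> mn h; rewrite /bdist.
apply: (big_ind (fun v => m <= v)%N) => //.
  by move=> u v mu mv; rewrite leq_min mu mv.
by move=> x /andP[] /h.
Qed.
End Main.

Local Open Scope ring_scope.

Theorem mainTheorem1 (F : finFieldType) (n k : nat) (C : {vspace 'rV[F]_n}) :
  \dim C = k -> C != 0%VS ->
  (exists2 c : 'rV[F]_n, c \in C &
     bweight 1 c = bdist 1 C /\ successive (bsupp 1 c)) ->
  forall b : nat, (1 <= b <= n)%N ->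
    bdist b C = minn (bdist 1 C + b - 1) n.
Proof.
move=> _ _ [c cC [wc sc]] b /andP[b1 bn].
have n0 : (0 < n)%N by lia.
have d1 : (1 <= bdist 1 C)%N.
  apply: bdist_ge => // x _ x0.
  exact: bweight1_pos.
have c0 : c != 0.
  apply/negP => /eqP c00; move: wc; rewrite c00 /bweight.
  rewrite (_ : bsupp 1 0 = set0) ?cards0; first lia.
  by apply/setP => i; rewrite bsupp1 !inE mxE eqxx.
apply/eqP; rewrite eqn_leq; apply/andP; split.
- apply: leq_trans (bdist_le b cC c0) _.
  rewrite leq_min bweight_le_n andbT -wc.
  exact: bweight_upper.
- apply: bdist_ge; first exact: geq_minr.
  move=> x xC x0; apply: leq_trans (bweight_lower x0 b1).
  have := bdist_le 1 xC x0; lia.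
Qed.
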